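(* Let $G=(V,E)$ be a graph that is strongly reconstructible in $\mathbb{C}^d$, and suppose that a pair of vertices $u,v\in V$ is globally linked in $G$ in $\mathbb{C}^d$. Then $G'=G+uv$ is strongly reconstructible in $\mathbb{C}^d$. Moreover, if $G$ is fully reconstructible in $\mathbb{C}^d$, then so is $G'$.
   Context: $G+uv$ denotes the graph obtained from $G$ by adding the edge $uv$. For $p:V\to\mathbb{C}^d$, $m_{uv}(p)=\sum_{k=1}^d(p(u)_k-p(v)_k)^2$ (defined for any vertex pair); a framework is generic if its coordinates are algebraically independent over $\mathbb{Q}$; $(G,p),(G,q)$ are equivalent if $m_{e}(p)=m_e(q)$ for all edges $e$; $(G,p),(H,q)$ are length-equivalent under a bijection $\psi:E(G)\to E(H)$ if $m_e(p)=m_{\psi(e)}(q)$ for all $e\in E(G)$. A pair $\{u,v\}$ is globally linked in $G$ in $\mathbb{C}^d$ if for every generic $(G,p)$ in $\mathbb{C}^d$ and every equivalent $(G,q)$ in $\mathbb{C}^d$, $m_{uv}(p)=m_{uv}(q)$. A generic $(G,p)$ in $\mathbb{C}^d$ is strongly reconstructible if for every graph $H$ with the same number of vertices as $G$ and every generic $(H,q)$ in $\mathbb{C}^d$ length-equivalent to $(G,p)$ under some $\psi$, there is an isomorphism $\varphi:V(G)\to V(H)$ with $\psi(xy)=\varphi(x)\varphi(y)$ for all $xy\in E(G)$. Fully reconstructible is defined the same way for $G$ without isolated vertices, but with $H$ ranging over all graphs without isolated vertices (any number of vertices). A graph is strongly (fully) reconstructible in $\mathbb{C}^d$ if all its generic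 realizations in $\mathbb{C}^d$ are. *)

(* Defs.v *)
From mathcomp Require Import all_boot all_order all_algebra.
From Stdlib Require Import Reals.
From mathcomp Require Import Rstruct.
From mathcomp.real_closed Require Import complex.
From mathcomp Require Import mpoly.

Set Implicit Arguments. Unset Strict Implicit. Unset Printing Implicit Defensive.
Import GRing.Theory.
Local Open Scope ring_scope.

Definition CC : numClosedFieldType := complex R.

Definition simple_graph (V : finType) (E : {set {set V}}) : Prop :=
  forall e, e \in E -> #|e| = 2%N.

Definition no_isolated (V : finType) (E : {set {set V}}) : Prop :=
  forall x : V, exists2 e, e \in E & x \in e.

Definition sqlen (d : nat) (V : finType) (p : V -> 'I_d -> CC) (x y : V) : CC :=
  \sum_(k < d) (p x k - p y k) ^+ 2.

Definition coords (d : nat) (V : finType) (p : V -> 'I_d -> CC)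
  (i : 'I_#|{: V * 'I_d}|) : CC :=
  let vk := enum_val i in p vk.1 vk.2.

Definition generic (d : nat) (V : finType) (p : V -> 'I_d -> CC) : Prop :=
  forall P : {mpoly rat[#|{: V * 'I_d}|]},
    P != 0 -> (map_mpoly (ratr : rat -> CC) P).@[coords p] != 0.

Definition equivalent (d : nat) (V : finType) (E : {set {set V}})
  (p q : V -> 'I_d -> CC) : Prop :=
  forall x y, [set x; y] \in E -> sqlen p x y = sqlen q x y.

Definition globally_linked (d : nat) (V : finType) (E : {set {set V}}) (u v : V) : Prop :=
  forall p q : V -> 'I_d -> CC, generic p -> equivalent E p q ->
    sqlen p u v = sqlen q u v.

Definition edge_bij (V W : finType) (E : {set {set V}}) (F : {set {set W}})
  (psi : {set V} -> {set W}) : Prop :=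
  {in E &, injective psi} /\ psi @: E = F.

Definition length_equiv (d : nat) (V W : finType) (E : {set {set V}})
  (p : V -> 'I_d -> CC) (q : W -> 'I_d -> CC) (psi : {set V} -> {set W}) : Prop :=
  forall x y x' y', [set x; y] \in E -> psi [set x; y] = [set x'; y'] ->
    sqlen p x y = sqlen q x' y'.

Definition induced_by_iso (V W : finType) (E : {set {set V}})
  (psi : {set V} -> {set W}) : Prop :=
  exists phi : V -> W, bijective phi /\ forall e, e \in E -> psi e = phi @: e.

Definition strongly_reconstructible_fw (d : nat) (V : finType) (E : {set {set V}})
  (p : V -> 'I_d -> CC) : Prop :=
  forall (W : finType) (F : {set {set W}}) (q : W -> 'I_d -> CC)
         (psi : {set V} -> {set W}),
    #|W| = #|V| -> simple_graph F -> generic q ->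
    edge_bij E F psi -> length_equiv E p q psi -> induced_by_iso E psi.

Definition strongly_reconstructible (d : nat) (V : finType) (E : {set {set V}}) : Prop :=
  forall p : V -> 'I_d -> CC, generic p -> strongly_reconstructible_fw E p.

Definition fully_reconstructible_fw (d : nat) (V : finType) (E : {set {set V}})
  (p : V -> 'I_d -> CC) : Prop :=
  forall (W : finType) (F : {set {set W}}) (q : W -> 'I_d -> CC)
         (psi : {set V} -> {set W}),
    simple_graph F -> no_isolated F -> generic q ->
    edge_bij E F psi -> length_equiv E p q psi -> induced_by_iso E psi.

Definition fully_reconstructible (d : nat) (V : finType) (E : {set {set V}}) : Prop :=
  no_isolated E /\
  forall p : V -> 'I_d -> CC, generic p -> fully_reconstructible_fw E p.

(* Main.v *)
Require Import Defs.
From mathcomp Require Import all_boot all_order all_algebra.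
From mathcomp Require Import mpoly.
Set Implicit Arguments. Unset Strict Implicit. Unset Printing Implicit Defensive.
Import GRing.Theory.
Local Open Scope ring_scope.

Lemma comp_mpolyA (R : comRingType) (n k l : nat) (p : {mpoly R[n]})
  (lq : n.-tuple {mpoly R[k]}) (lr : k.-tuple {mpoly R[l]}) :
  (p \mPo lq) \mPo lr = p \mPo [tuple (tnth lq i) \mPo lr | i < n].
Proof.
rewrite [p]mpolyE (raddf_sum (comp_mpoly lq)) !(raddf_sum (comp_mpoly _)).
apply/eq_bigr => m _.
rewrite /= !comp_mpolyZ; congr (_ *: _).
rewrite !comp_mpolyX rmorph_prod /=.
by apply/eq_bigr=> i _; rewrite rmorphXn tnth_map tnth_ord_tuple.
Qed.
Lemma map_mpolyXU (n : nat) (R S : nzRingType) (f : {rmorphism R -> S}) (i : 'I_n) :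
  map_mpoly f 'X_i = 'X_i.
Proof. by rewrite /mpolyX map_mpolyX. Qed.

Lemma generic_comp (d : nat) (W' W : finType) (h : W' -> W) (q : W -> 'I_d -> CC) :
  injective h -> generic q -> generic (fun x => q (h x)).
Proof.
move=> hinj gq P P0.
pose g (i : 'I_#|{: W' * 'I_d}|) : 'I_#|{: W * 'I_d}| :=
  enum_rank (h (enum_val i).1, (enum_val i).2).
have ginj : injective g.
  move=> i j /enum_rank_inj [/hinj e1 e2].
  by apply: enum_val_inj; case: (enum_val i) e1 e2 => ? ?; case: (enum_val j) => ? ? /= -> ->.
pose t := [tuple ('X_(g i) : {mpoly rat[#|{: W * 'I_d}|]}) | i < #|{: W' * 'I_d}|].
pose t' := [tuple (if [pick i | g i == j] is Some i then 'X_i else 0 : {mpoly rat[#|{: W' * 'I_d}|]}) | j < #|{: W * 'I_d}|].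
have P2P : (P \mPo t) \mPo t' = P.
  rewrite comp_mpolyA -[RHS]comp_mpoly_id; congr comp_mpoly.
  apply: eq_from_tnth => i; rewrite !tnth_map !tnth_ord_tuple comp_mpolyXU.
  rewrite -tnth_nth tnth_map tnth_ord_tuple.
  case: pickP => [j /eqP /ginj -> //|/(_ i)]; by rewrite eqxx.
have P2n0 : P \mPo t != 0.
  by apply: contraNneq P0 => e; rewrite -P2P e comp_mpoly0.
have := gq _ P2n0.
rewrite map_mpoly_comp; last exact: fmorph_inj.
rewrite comp_mpoly_meval.
congr (_ != 0); apply: meval_eq => i.
rewrite !tnth_map tnth_ord_tuple map_mpolyXU mevalXU /coords /g enum_rankK /=.
by case: (enum_val i).
Qed.
Lemma meval_sum (n : nat) (R : comRingType) (v : 'I_n -> R) (I : Type) (r : seq I)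
  (P : pred I) (F : I -> {mpoly R[n]}) :
  (\sum_(i <- r | P i) F i).@[v] = \sum_(i <- r | P i) (F i).@[v].
Proof. exact: (big_morph _ (mevalD v) (meval0 v)). Qed.


Lemma eval_sqsum (S : numFieldType) (n d : nat) (v : 'I_n -> S) (f g h l : 'I_d -> 'I_n) :
  (map_mpoly (ratr : rat -> S)
     (\sum_(k < d) ('X_(f k) - 'X_(g k)) ^+ 2 - \sum_(k < d) ('X_(h k) - 'X_(l k)) ^+ 2)).@[v]
  = \sum_(k < d) (v (f k) - v (g k)) ^+ 2 - \sum_(k < d) (v (h k) - v (l k)) ^+ 2.
Proof.
rewrite rmorphB !rmorph_sum /= mevalB !meval_sum.
have gen (i j : 'I_n) :
    (map_mpoly (ratr : rat -> S) (('X_i - 'X_j) ^+ 2)).@[v] = (v i - v j) ^+ 2.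
  by rewrite rmorphXn rmorphB /= !map_mpolyXU !expr2 mevalM mevalB !mevalXU.
by congr (_ - _); apply: eq_bigr => k _; rewrite gen.
Qed.

Lemma generic_dist_aux (d : nat) (W : finType) (q : W -> 'I_d -> CC) (a b c e : W) :
  (0 < d)%N -> generic q -> a != b -> a \notin [set c; e] ->
  sqlen q a b != sqlen q c e.
Proof.
move=> d0 gq ab ace.
pose r (x : W) (k : 'I_d) : 'I_#|{: W * 'I_d}| := enum_rank (x, k).
pose P : {mpoly rat[#|{: W * 'I_d}|]} :=
  \sum_(k < d) ('X_(r a k) - 'X_(r b k)) ^+ 2 - \sum_(k < d) ('X_(r c k) - 'X_(r e k)) ^+ 2.
have P0 : P != 0.
  pose z (i : 'I_#|{: W * 'I_d}|) : rat := if (enum_val i).1 == a then 1 else 0.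
  apply/negP => /eqP P0.
  have : P.@[z] = 0 by rewrite P0 meval0.
  rewrite /P mevalB !(raddf_sum (meval z)) /=.
  have zE x k : z (r x k) = (x == a)%:R by rewrite /z /r enum_rankK /=; case: (x == a).
  under eq_bigr do rewrite rmorphXn /= mevalB !mevalXU !zE eqxx eq_sym (negbTE ab) subr0 expr1n.
  move: ace; rewrite !inE negb_or => /andP [ac ae].
  under [X in _ - X]eq_bigr do rewrite rmorphXn /= mevalB !mevalXU !zE eq_sym (negbTE ac) eq_sym (negbTE ae) subrr expr0n.
  rewrite [X in _ - X]big1 // subr0 big_const_ord iter_addr addr0 => /eqP.
  by rewrite Num.Theory.pnatr_eq0 => /eqP d00; rewrite d00 in d0.
have := gq _ P0.
rewrite /P (eval_sqsum (S := CC)) subr_eq0 /sqlen /coords /r.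
by under eq_bigr do rewrite !enum_rankK; under [X in _ != X]eq_bigr do rewrite !enum_rankK.
Qed.

Lemma sqlen_sym (d : nat) (W : finType) (q : W -> 'I_d -> CC) a b :
  sqlen q a b = sqlen q b a.
Proof. by apply: eq_bigr => k _; rewrite -opprB sqrrN. Qed.

Lemma generic_dist (d : nat) (W : finType) (q : W -> 'I_d -> CC) (a b c e : W) :
  (0 < d)%N -> generic q -> a != b -> c != e -> sqlen q a b = sqlen q c e ->
  [set a; b] = [set c; e].
Proof.
move=> d0 gq ab ce eq.
case: (boolP (a \in [set c; e])) => ha; last first.
  by move: (generic_dist_aux d0 gq ab ha); rewrite eq eqxx.
case: (boolP (b \in [set c; e])) => hb; last first.
  rewrite eq_sym in ab.
  by move: (generic_dist_aux d0 gq ab hb); rewrite sqlen_sym eq eqxx.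
apply/eqP; rewrite eqEcard !cards2 ab ce andbT.
by apply/subsetP => x /set2P [] ->.
Qed.

Lemma core (d : nat) (V W : finType) (E : {set {set V}}) (u v : V)
  (p : V -> 'I_d -> CC) (q : W -> 'I_d -> CC) (psi : {set V} -> {set W}) (phi : V -> W) :
  (0 < d)%N -> generic q -> globally_linked d E u v -> generic p ->
  #|psi [set u; v]| = 2 ->
  length_equiv (E :|: [set [set u; v]]) p q psi -> injective phi -> u != v ->
  (forall e, e \in E -> psi e = phi @: e) -> psi [set u; v] = phi @: [set u; v].
Proof.
move=> d0 gq gl gp c2 le phiinj uv hphi.
have /cards2P [x' [y' [xy e]]] : #|psi [set u; v]| == 2 by rewrite c2.
have h1 : sqlen p u v = sqlen q x' y'.
  by apply: le e; rewrite !inE eqxx orbT.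
have h2 : sqlen p u v = sqlen (fun x => q (phi x)) u v.
  apply: gl => // x y exy; apply: le; first by rewrite inE exy.
  by rewrite hphi // imsetU1 imset_set1.
rewrite e imsetU1 imset_set1; apply: (generic_dist d0 gq xy).
  by rewrite (inj_eq phiinj).
by rewrite -h1 h2.
Qed.

Theorem lemma4p10 (d : nat) (V : finType) (E : {set {set V}}) (u v : V) :
  (0 < d)%N -> simple_graph E -> u != v ->
  strongly_reconstructible d E -> globally_linked d E u v ->
  strongly_reconstructible d (E :|: [set [set u; v]]) /\
  (fully_reconstructible d E -> fully_reconstructible d (E :|: [set [set u; v]])).
Proof.
move=> d0 sE uv SR gl.
have uvE' : [set u; v] \in E :|: [set [set u; v]] by rewrite !inE eqxx orbT.
split.
  move=> p gp W F q psi cW sF gq [pinj pim] le.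
  have pinjE : {in E &, injective psi}.
    by move=> x y xE yE; apply: pinj; rewrite inE ?xE ?yE.
  have hsF : simple_graph (psi @: E).
    move=> f /imsetP [e eE ->]; apply: sF; rewrite -pim; apply: imset_f.
    by rewrite inE eE.
  have heb : edge_bij E (psi @: E) psi by split.
  have hle : length_equiv E p q psi.
    by move=> x y x' y' xyE; apply: le; rewrite inE xyE.
  have [phi [bphi hphi]] := SR p gp W (psi @: E) q psi cW hsF gq heb hle.
  exists phi; split => // e; rewrite inE => /orP [eE|/set1P ->]; first exact: hphi.
  apply: (core d0 gq gl gp _ le (bij_inj bphi) uv hphi).
  by apply: sF; rewrite -pim imset_f.
move=> [niE fE]; split.
  by move=> x; have [e eE xe] := niE x; exists e; rewrite ?inE ?eE.
move=> p gp W F q psi sF niF gq [pinj pim] le.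
pose P (w : W) := [exists e in E, w \in psi e].
pose W' := {w : W | P w}.
pose psi' (s : {set V}) := [set w' : W' | val w' \in psi s].
pose q' (w' : W') := q (val w').
have valpsi e : e \in E -> psi e = val @: psi' e.
  move=> eE; apply/setP => w; apply/idP/imsetP.
    move=> we; have Pw : P w by apply/existsP; exists e; rewrite eE.
    by exists (exist _ w Pw); rewrite // inE.
  by move=> [w' + ->]; rewrite inE.
have pinjE : {in E &, injective psi}.
  by move=> x y xE yE; apply: pinj; rewrite inE ?xE ?yE.
have hsF : simple_graph (psi' @: E).
  move=> f /imsetP [e eE ->].
  rewrite -(card_imset _ val_inj) -valpsi //; apply: sF; rewrite -pim imset_f //.
  by rewrite inE eE.
have hni : no_isolated (psi' @: E).
  move=> w'; have /existsP [e /andP [eE we]] := valP w'.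
  by exists (psi' e); rewrite ?imset_f // inE.
have hgq : generic q' by exact: generic_comp val_inj gq.
have heb : edge_bij E (psi' @: E) psi'.
  split=> // x y xE yE exy; apply: pinjE => //.
  by rewrite !valpsi // exy.
have hle : length_equiv E p q' psi'.
  move=> x y x' y' xyE e'; apply: le; first by rewrite inE xyE.
  by rewrite valpsi // e' imsetU1 imset_set1.
have [phi' [bphi' hphi']] := fE p gp W' (psi' @: E) q' psi' hsF hni hgq heb hle.
pose phi x := val (phi' x).
have phiinj : injective phi by move=> x y /val_inj /(bij_inj bphi').
have hphi e : e \in E -> psi e = phi @: e.
  by move=> eE; rewrite valpsi // hphi' // -imset_comp.
have hphiE e : e \in E :|: [set [set u; v]] -> psi e = phi @: e.
  rewrite inE => /orP [eE|/set1P ->]; first exact: hphi.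
  apply: (core d0 gq gl gp _ le phiinj uv hphi).
  by apply: sF; rewrite -pim imset_f.
exists phi; split => //.
apply: inj_card_bij phiinj _.
have hW : (#|W| <= #|phi @: [set: V]|)%N.
  rewrite -cardsT; apply: subset_leq_card; apply/subsetP => w _.
have [f fF wf] := niF w.
move: fF; rewrite -pim => /imsetP [e eE fe].
move: wf; rewrite fe hphiE // => /imsetP [x _ ->].
  by rewrite imset_f.
apply: leq_trans hW _; rewrite -[#|V|]cardsT; exact: leq_imset_card.
Qed.
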